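(* Let $x_1,\dots,x_n\in\mathbb{R}^2$ satisfy $x_i\prec x_j$ whenever $i<j$, let $E=\{x_1,\dots,x_n\}$ and $2\le p\le n$. Then the optimal value of the Max-Min $p$-dispersion problem in $E$ equals $$\max_{1\le i_1<\dots<i_p\le n}\ \min_{j\in\{1,\dots,p-1\}}d_{i_j,i_{j+1}},$$ and the optimal value of the Max-Sum-Min $p$-dispersion problem in $E$ equals $$\max_{1\le i_1<\dots<i_p\le n}\ \sum_{j=1}^{p}m_j,\quad\text{where } m_1=d_{i_1,i_2},\ m_p=d_{i_{p-1},i_p},\ m_j=\min(d_{i_j,i_{j+1}},d_{i_j,i_{j-1}})\text{ for }1<j<p.$$
   Context: For $y=(y^1,y^2),z=(z^1,z^2)\in\mathbb{R}^2$ write $y\prec z$ iff $y^1<z^1$ and $y^2>z^2$. Fix $\alpha>0$, let $d$ be the Euclidean distance, and set $d_{ij}=d(x_i,x_j)^\alpha$. Let $D_p$ be the set of $p$-tuples $(z_1,\dots,z_p)\in E^p$ of pairwise distinct points. The Max-Min $p$-dispersion problem is $\max_{(z_1,\dots,z_p)\in D_p}\min_{1\le i<j\le p}d(z_i,z_j)^\alpha$; the Max-Sum-Min $p$-dispersion problem is $\max_{(z_1,\dots,z_p)\in D_p}\sum_{i=1}^{p}\min_{j\ne i}d(z_i,z_j)^\alpha$. *)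

(* Defs.v *)
From HB Require Import structures.
From mathcomp Require Import all_boot all_order all_algebra.
From mathcomp Require Import all_classical all_reals all_analysis.
Set Implicit Arguments. Unset Strict Implicit. Unset Printing Implicit Defensive.
Import Order.TTheory GRing.Theory Num.Theory.
Local Open Scope ring_scope.
Local Open Scope ereal_scope.

Section Defs.
Variable R : realType.
Notation pt := (R * R)%type.

Definition prec (y z : pt) : Prop := (y.1 < z.1)%R /\ (z.2 < y.2)%R.

Definition edist (y z : pt) : R :=
  Num.sqrt ((y.1 - z.1) ^+ 2 + (y.2 - z.2) ^+ 2)%R.

Definition dpow (alpha : R) (y z : pt) : R := (edist y z) `^ alpha.

Definition Dp (x : nat -> pt) (n p : nat) (z : nat -> pt) : Prop :=
  (forall k, (k < p)%N -> exists i, (i < n)%N /\ z k = x i) /\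
  (forall k l, (k < p)%N -> (l < p)%N -> k <> l -> z k <> z l).

Definition maxmin_obj (alpha : R) (p : nat) (z : nat -> pt) : \bar R :=
  \big[mine/+oo]_(0 <= i < p) \big[mine/+oo]_(0 <= j < p | (i < j)%N)
     (dpow alpha (z i) (z j))%:E.

Definition maxsummin_obj (alpha : R) (p : nat) (z : nat -> pt) : \bar R :=
  \sum_(0 <= i < p) \big[mine/+oo]_(0 <= j < p | j != i)
     (dpow alpha (z i) (z j))%:E.

Definition is_max_value (T : Type) (P : T -> Prop) (f : T -> \bar R)
    (v : \bar R) : Prop :=
  (exists z, P z /\ f z = v) /\ (forall z, P z -> f z <= v).

(* 0-based strictly increasing index sequences s 0 < ... < s (p-1) < n
   (i.e. 1 <= i_1 < ... < i_p <= n with i_j = s (j-1) + 1) *)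
Definition incr_idx (n p : nat) (s : nat -> nat) : Prop :=
  (forall k, (k.+1 < p)%N -> (s k < s k.+1)%N) /\ (s p.-1 < n)%N.

Definition chain_min (alpha : R) (x : nat -> pt) (p : nat) (s : nat -> nat)
    : \bar R :=
  \big[mine/+oo]_(0 <= j < p.-1) (dpow alpha (x (s j)) (x (s j.+1)))%:E.

Definition chain_m (alpha : R) (x : nat -> pt) (p : nat) (s : nat -> nat)
    (j : nat) : R :=
  if j == 0%N then dpow alpha (x (s 0%N)) (x (s 1%N))
  else if j == p.-1 then dpow alpha (x (s p.-2)) (x (s p.-1))
  else Num.min (dpow alpha (x (s j)) (x (s j.+1)))
               (dpow alpha (x (s j)) (x (s j.-1))).

Definition chain_sum (alpha : R) (x : nat -> pt) (p : nat) (s : nat -> nat)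
    : \bar R :=
  (\sum_(0 <= j < p) chain_m alpha x p s j)%R%:E.

End Defs.

(* Main.v *)
Require Import Defs.
From HB Require Import structures.
From mathcomp Require Import all_boot all_order all_algebra.
From mathcomp Require Import all_classical all_reals all_analysis.
From mathcomp Require Import lra zify.
Import Order.TTheory GRing.Theory Num.Theory.
Local Open Scope ring_scope.

Section Gen.
Variable R : realType.
Local Open Scope ereal_scope.

Lemma bigmine_le (I : eqType) (r : seq I) (P : pred I) (F : I -> \bar R) i :
  i \in r -> P i -> \big[mine/+oo]_(j <- r | P j) F j <= F i.
Proof. by move=> ir Pi; rewrite (big_rem i) //= Pi ge_min lexx. Qed.

Lemma le_bigmine (I : eqType) (r : seq I) (P : pred I) (F : I -> \bar R) c :
  (forall i, i \in r -> P i -> c <= F i) -> c <= \big[mine/+oo]_(j <- r | P j) F j.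
Proof.
move=> H; rewrite big_seq_cond; apply: (big_ind (fun v => c <= v)).
- exact: leey.
- by move=> a b ha hb; rewrite le_min ha hb.
- by move=> i /andP[]; apply: H.
Qed.

Lemma edistC (y z : R * R) : Defs.edist y z = Defs.edist z y.
Proof. by rewrite /Defs.edist -(sqrrN (y.1 - z.1)) -(sqrrN (y.2 - z.2)) !opprB. Qed.

Lemma dpowC alpha (y z : R * R) : Defs.dpow alpha y z = Defs.dpow alpha z y.
Proof. by rewrite /Defs.dpow edistC. Qed.

Lemma edist_mono (y z w : R * R) : prec y z -> prec z w ->
  (Defs.edist y z <= Defs.edist y w)%R /\ (Defs.edist z w <= Defs.edist y w)%R.
Proof.
case: y => y1 y2; case: z => z1 z2; case: w => w1 w2.
rewrite /prec /Defs.edist /= => -[h1 h2] [h3 h4].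
have g : forall a b : R, (0 <= b)%R -> (a <= b)%R -> (Num.sqrt a <= Num.sqrt b)%R.
  by move=> a b b0 ab; rewrite ler_sqrt.
split; apply: g; rewrite ?addr_ge0 ?sqr_ge0 //; nra.
Qed.

Lemma dpow_mono alpha (y z w : R * R) : (0 < alpha)%R -> prec y z -> prec z w ->
  (Defs.dpow alpha y z <= Defs.dpow alpha y w)%R /\ (Defs.dpow alpha z w <= Defs.dpow alpha y w)%R.
Proof.
move=> a0 pyz pzw; have [h1 h2] := edist_mono _ _ _ pyz pzw.
split; apply: ge0_ler_powR; rewrite ?nnegrE ?sqrtr_ge0 ?(ltW a0) //.
Qed.
End Gen.

Section Incr.
Variables (n p : nat).
Lemma incr_lt s : incr_idx n p s -> forall k l, (k < l)%N -> (l < p)%N -> (s k < s l)%N.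
Proof.
case=> hs _ k l; elim: l => // l IH; rewrite ltnS leq_eqVlt => /orP[/eqP <-|kl] lp.
  exact: hs.
exact: ltn_trans (IH kl (ltnW lp)) (hs _ lp).
Qed.

Lemma incr_n s : incr_idx n p s -> forall k, (k < p)%N -> (s k < n)%N.
Proof.
move=> hs k kp; have [_ hn] := hs; case: (ltngtP k p.-1) => h.
- by apply: ltn_trans (incr_lt _ hs _ _ h _) hn; lia.
- lia.
- by rewrite h.
Qed.

End Incr.

Lemma fin_max (R : realType) (n p : nat) (G : (nat -> nat) -> \bar R) :
  (0 < p)%N -> (p <= n)%N ->
  (forall s s', (forall k, (k < p)%N -> s k = s' k) -> G s = G s') ->
  exists s0, incr_idx n p s0 /\ forall s, incr_idx n p s -> (G s <= G s0)%E.
Proof.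
move=> p0 pn Gext.
have incr_ext : forall s s', (forall k, (k < p)%N -> s k = s' k) ->
    incr_idx n p s -> incr_idx n p s'.
  move=> s s' e [h1 h2]; split.
    move=> k kp; rewrite -(e k) ?(e k.+1) -?(e k.+1) //; [exact: h1 | lia..].
  rewrite -e //; lia.
pose ext (t : {ffun 'I_p -> 'I_n}) (k : nat) : nat :=
  if insub k is Some i then val (t i) else 0%N.
have extE : forall t k (kp : (k < p)%N), ext t k = val (t (Ordinal kp)).
  by move=> t k kp; rewrite /ext insubT.
have tof : forall s, incr_idx n p s -> exists t, forall k, (k < p)%N -> ext t k = s k.
  move=> s hs; exists [ffun i : 'I_p => Ordinal (incr_n _ _ _ hs _ (ltn_ord i))].
  by move=> k kp; rewrite extE ffunE.
pose Q := fun t => `[< incr_idx n p (ext t) >].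
have sid : incr_idx n p id by split => //=; lia.
have [t1 e1] := tof _ sid.
have Qt1 : Q t1 by apply/asboolP; apply: incr_ext sid => k kp; rewrite e1.
case: (arg_maxP (fun t => G (ext t)) Qt1) => tm Qtm Hmax.
exists (ext tm); split; first exact/asboolP.
move=> s hs; have [t et] := tof _ hs.
rewrite (Gext s (ext t)); last by move=> k kp; rewrite et.
by apply: Hmax; apply/asboolP; apply: incr_ext hs => k kp; rewrite et.
Qed.

Lemma assemble (R : realType) (n p : nat) (x : nat -> R * R)
  (F : (nat -> R * R) -> \bar R) (G : (nat -> nat) -> \bar R) :
  (forall z, Dp x n p z -> exists s, incr_idx n p s /\ F z = G s) ->
  (forall s, incr_idx n p s -> exists z, Dp x n p z /\ F z = G s) ->
  (exists s0, incr_idx n p s0 /\ forall s, incr_idx n p s -> (G s <= G s0)%E) ->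
  exists v, is_max_value (Dp x n p) F v /\ is_max_value (incr_idx n p) G v.
Proof.
move=> h1 h2 [s0 [hs0 hmax]]; exists (G s0); split; split.
- by have [z [hz e]] := h2 _ hs0; exists z.
- by move=> z hz; have [s [hs ->]] := h1 _ hz; exact: hmax.
- by exists s0.
- exact: hmax.
Qed.

Section Main.
Variables (R : realType) (alpha : R) (n p : nat) (x : nat -> R * R).
Hypothesis ha : (0 < alpha)%R.
Hypothesis hx : forall i j, (i < j)%N -> (j < n)%N -> prec (x i) (x j).
Hypothesis hp : (2 <= p)%N.
Hypothesis hpn : (p <= n)%N.
Local Notation D a b := (Defs.dpow alpha (x a) (x b)).
Local Open Scope ereal_scope.

Lemma D_mono1 a b c : (a < b)%N -> (b <= c)%N -> (c < n)%N -> (D a b <= D a c)%R.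
Proof.
move=> ab; rewrite leq_eqVlt => /orP[/eqP -> //|bc] cn.
exact: (dpow_mono _ _ _ _ _ ha (hx _ _ ab (ltn_trans bc cn)) (hx _ _ bc cn)).1.
Qed.

Lemma D_mono2 a b c : (a <= b)%N -> (b < c)%N -> (c < n)%N -> (D b c <= D a c)%R.
Proof.
rewrite leq_eqVlt => /orP[/eqP -> //|ab] bc cn.
exact: (dpow_mono _ _ _ _ _ ha (hx _ _ ab (ltn_trans bc cn)) (hx _ _ bc cn)).2.
Qed.

Section Sorted.
Variable t : seq nat.
Hypotheses (st : sorted ltn t) (tn : all (fun a => a < n)%N t) (tp : size t = p).
Local Notation f := (nth 0%N t).

Lemma f_lt i j : (i < j)%N -> (j < p)%N -> (f i < f j)%N.
Proof.
move=> ij jp; apply: (sorted_ltn_nth ltn_trans 0%N st) => //; rewrite inE tp //.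
exact: ltn_trans ij jp.
Qed.

Lemma f_n i : (i < p)%N -> (f i < n)%N.
Proof. by move=> ip; move/all_nthP: tn; apply; rewrite tp. Qed.

Lemma chain_min_le u v : (u < v)%N -> (v < p)%N ->
  chain_min alpha x p f <= (D (f u) (f v))%:E.
Proof.
move=> uv vp.
have up1 : (u < p.-1)%N by lia.
rewrite /chain_min.
have hb := @bigmine_le R nat (index_iota 0 p.-1) xpredT (fun j => (D (f j) (f j.+1))%:E) u.
rewrite mem_index_iota up1 in hb.
apply: le_trans (hb isT isT) _.
rewrite lee_fin; apply: D_mono1.
- apply: f_lt => //; lia.
- rewrite leq_eqVlt; case: (ltngtP u.+1 v) => h; [by rewrite f_lt ?orbT // | lia | by rewrite h eqxx].
- exact: f_n.
Qed.

Lemma neigh k : (k < p)%N ->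
  \big[mine/+oo]_(b <- t | b != f k) (D (f k) b)%:E = (chain_m alpha x p f k)%:E.
Proof.
move=> kp.
have mem : forall i, (i < p)%N -> f i \in t by move=> i ip; rewrite mem_nth // tp.
have nq : forall i j, (i < j)%N -> (j < p)%N -> f j != f i.
  by move=> i j ij jp; rewrite neq_ltn (f_lt _ _ ij jp) orbT.
have nq' : forall i j, (i < j)%N -> (j < p)%N -> f i != f j.
  by move=> i j ij jp; rewrite neq_ltn (f_lt _ _ ij jp).
apply/le_anti/andP; split.
- rewrite /chain_m; case: ifP => [/eqP k0|kn0].
    subst k; apply: bigmine_le; [apply: mem; lia| apply: nq; lia].
  case: ifP => [/eqP kp1|kp1].
    rewrite dpowC; subst k.
    apply: bigmine_le; [apply: mem; lia| apply: nq'; lia].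
  have kp' : (k.+1 < p)%N.
    have : k != p.-1 by rewrite kp1.
    lia.
  have k0 : (0 < k)%N by rewrite lt0n kn0.
  rewrite EFin_min le_min; apply/andP; split; apply: bigmine_le.
  + apply: mem; lia.
  + apply: nq; lia.
  + apply: mem; lia.
  + apply: nq'; lia.
- apply: le_bigmine => b bt bk.
  have [m ib fm] : exists2 m, (m < p)%N & b = f m.
    by exists (index b t); [rewrite -tp index_mem | rewrite nth_index].
  subst b.
  have mk : m != k by apply: contraNneq bk => ->.
  rewrite lee_fin /chain_m.
  case: (ltngtP m k) mk => // mk _.
  +
    have k0 : k != 0%N by lia.
    have step : (D (f k) (f k.-1) <= D (f k) (f m))%R.
      rewrite dpowC [X in (_ <= X)%R]dpowC; apply: D_mono2; last exact: f_n.
      * rewrite leq_eqVlt; case: (ltngtP m k.-1) => h; [by rewrite f_lt ?orbT //; lia | lia | by rewrite h eqxx].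
      * apply: f_lt; lia.
    rewrite (negbTE k0); case: ifP => [/eqP kp1|_].
      by rewrite kp1 in step *; rewrite [X in (X <= _)%R]dpowC.
    by rewrite ge_min step orbT.
  +
    have kp' : (k.+1 < p)%N by lia.
    have step : (D (f k) (f k.+1) <= D (f k) (f m))%R.
      apply: D_mono1; [apply: f_lt; lia | | exact: f_n].
      rewrite leq_eqVlt; case: (ltngtP k.+1 m) => h; [by rewrite f_lt ?orbT | lia | by rewrite h eqxx].
    case: ifP => [/eqP k0|_]; first by subst k.
    case: ifP => [/eqP kp1|_]; first by lia.
    by rewrite ge_min step.
Qed.
End Sorted.

Lemma x_inj i j : (i < n)%N -> (j < n)%N -> x i = x j -> i = j.
Proof.
move=> il jl e; case: (ltngtP i j) => // h.
- by have := hx _ _ h jl; rewrite e => -[h1 _]; rewrite ltxx in h1.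
- by have := hx _ _ h il; rewrite e => -[h1 _]; rewrite ltxx in h1.
Qed.

Lemma chain_min_ext s s' : (forall k, (k < p)%N -> s k = s' k) ->
  chain_min alpha x p s = chain_min alpha x p s'.
Proof.
move=> e; apply: eq_big_nat => j /andP[_ jp].
rewrite (e j) ?(e j.+1) //; lia.
Qed.

Lemma chain_sum_ext s s' : (forall k, (k < p)%N -> s k = s' k) ->
  chain_sum alpha x p s = chain_sum alpha x p s'.
Proof.
move=> e; rewrite /chain_sum; congr (_%:E); apply: eq_big_nat => j /andP[_ jp].
rewrite /chain_m; case: ifP => _.
  by rewrite (e 0%N) ?(e 1%N) //; lia.
case: ifP => jn.
  by rewrite (e p.-2) ?(e p.-1) //; lia.
move/negbT: jn => jn.
rewrite (e j) ?(e j.+1) ?(e j.-1) //; lia.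
Qed.

Section Z.
Variables (z : nat -> R * R) (sg : nat -> nat).
Hypotheses (hsn : forall k, (k < p)%N -> (sg k < n)%N)
  (hz : forall k, (k < p)%N -> z k = x (sg k))
  (hinj : forall k l, (k < p)%N -> (l < p)%N -> sg k = sg l -> k = l).
Local Notation L := (map sg (index_iota 0 p)).
Local Notation t := (sort leq L).

Lemma memL b : b \in L -> exists2 k, (k < p)%N & b = sg k.
Proof. by case/mapP => k; rewrite mem_index_iota => /andP[_ kp] ->; exists k. Qed.

Lemma uL : uniq L.
Proof.
rewrite map_inj_in_uniq ?iota_uniq // => k l; rewrite !mem_index_iota.
by move=> /andP[_ kp] /andP[_ lp]; apply: hinj.
Qed.

Lemma st_t : sorted ltn t.
Proof. by rewrite ltn_sorted_uniq_leq sort_uniq uL sort_sorted //; exact: leq_total. Qed.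

Lemma tn_t : all (fun a => a < n)%N t.
Proof. by rewrite all_sort; apply/allP => b /memL [k kp ->]; exact: hsn. Qed.

Lemma tp_t : size t = p.
Proof. by rewrite size_sort size_map size_iota subn0. Qed.

Lemma sg_in k : (k < p)%N -> sg k \in t.
Proof. by move=> kp; rewrite mem_sort; apply: map_f; rewrite mem_index_iota. Qed.

Lemma t_pos b : b \in t -> exists2 u, (u < p)%N & b = nth 0%N t u.
Proof. by move=> bt; exists (index b t); [rewrite -[X in (_ < X)%N]tp_t index_mem | rewrite nth_index]. Qed.

Lemma t_sg u : (u < p)%N -> exists2 k, (k < p)%N & nth 0%N t u = sg k.
Proof. by move=> up; apply: memL; rewrite -(mem_sort leq) mem_nth // tp_t. Qed.

Lemma incr_t : incr_idx n p (nth 0%N t).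
Proof.
split.
- move=> k kp; apply: (f_lt _ st_t tp_t) => //.
- apply: (f_n _ tn_t tp_t); lia.
Qed.

Lemma maxmin_le_pair a b : (a < p)%N -> (b < p)%N -> a != b ->
  maxmin_obj alpha p z <= (Defs.dpow alpha (z a) (z b))%:E.
Proof.
move=> ap bp; wlog ab : a b ap bp / (a < b)%N.
  move=> W ab; case: (ltngtP a b) => h.
  - exact: W.
  - by rewrite dpowC; apply: W => //; rewrite neq_ltn h ?orbT.
  - by move: ab; rewrite h eqxx.
move=> _; rewrite /maxmin_obj.
apply: le_trans; first (apply: (@bigmine_le R _ _ _ _ a) => //; rewrite mem_index_iota //).
apply: (@bigmine_le R _ _ _ _ b) => //; rewrite mem_index_iota //.
Qed.

Lemma maxmin_eq : maxmin_obj alpha p z = chain_min alpha x p (nth 0%N t).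
Proof.
apply/le_anti/andP; split.
- apply: le_bigmine => j; rewrite mem_index_iota => /andP[_ jp] _.
  have jp' : (j.+1 < p)%N by lia.
  have [a ap ea] := t_sg _ (ltnW jp'); have [b bp eb] := t_sg _ jp'.
  rewrite ea eb -(hz _ ap) -(hz _ bp); apply: maxmin_le_pair => //.
  apply/eqP => ab; subst b.
  have := f_lt _ st_t tp_t _ _ (ltnSn j) jp'; rewrite ea eb ltnn //.
- apply: le_bigmine => i; rewrite mem_index_iota => /andP[_ ip] _.
  apply: le_bigmine => j; rewrite mem_index_iota => /andP[_ jp] ij.
  rewrite (hz _ ip) (hz _ jp).
  have [u up eu] := t_pos _ (sg_in _ ip); have [v vp ev] := t_pos _ (sg_in _ jp).
  rewrite eu ev; case: (ltngtP u v) => uv.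
  + exact: chain_min_le _ st_t tn_t tp_t _ _ uv vp.
  + by rewrite dpowC; exact: chain_min_le _ st_t tn_t tp_t _ _ uv up.
  + exfalso; subst v; have := hinj _ _ ip jp (etrans eu (esym ev)); lia.
Qed.

Lemma summin_eq : maxsummin_obj alpha p z = chain_sum alpha x p (nth 0%N t).
Proof.
pose g a := chain_m alpha x p (nth 0%N t) (index a t).
have inner : forall i, (0 <= i < p)%N ->
  \big[mine/+oo]_(0 <= j < p | j != i) (Defs.dpow alpha (z i) (z j))%:E = (g (sg i))%:E.
  move=> i /andP[_ ip].
  transitivity (\big[mine/+oo]_(j <- index_iota 0 p | sg j != sg i) (Defs.dpow alpha (x (sg i)) (x (sg j)))%:E).
    rewrite big_seq_cond [RHS]big_seq_cond; apply: eq_big => j.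
      case: (boolP (j \in _)) => //=; rewrite mem_index_iota => /andP[_ jp].
      apply/idP/idP; apply: contra_neq; [exact: hinj | by move->].
    by case/andP; rewrite mem_index_iota => /andP[_ jp] _; rewrite (hz _ ip) (hz _ jp).
  rewrite -(big_map sg (fun b => b != sg i) (fun b => (Defs.dpow alpha (x (sg i)) (x b))%:E)).
  rewrite -(perm_big _ (permEl (perm_sort leq (map sg (index_iota 0 p))))).
  have [u up eu] := t_pos _ (sg_in _ ip).
  rewrite /g eu index_uniq ?tp_t ?sort_uniq ?uL //.
  exact: (neigh _ st_t tn_t tp_t _ up).
rewrite /maxsummin_obj (eq_big_nat _ _ inner) sumEFin /chain_sum; congr (_%:E).
rewrite -(big_map sg xpredT g) -(perm_big _ (permEl (perm_sort leq (map sg (index_iota 0 p))))).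
rewrite (big_nth 0%N) tp_t; apply: eq_big_nat => j /andP[_ jp].
by rewrite /g index_uniq ?tp_t ?sort_uniq ?uL.
Qed.

End Z.

Lemma from_Dp z : Dp x n p z -> exists sg : nat -> nat,
  [/\ (forall k, (k < p)%N -> (sg k < n)%N),
      (forall k, (k < p)%N -> z k = x (sg k)) &
      (forall k l, (k < p)%N -> (l < p)%N -> sg k = sg l -> k = l)].
Proof.
case=> h1 h2.
have [sg hsg] : exists sg : nat -> nat, forall k, (k < p)%N -> (sg k < n)%N /\ z k = x (sg k).
  have H : forall k, exists i, (k < p)%N -> (i < n)%N /\ z k = x i.
    move=> k; case: (ltnP k p) => kp.
      by have [i hi] := h1 k kp; exists i.
    by exists 0%N => h; lia.
  by have [f hf] := choice H; exists f.
exists sg; split.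
- by move=> k kp; case: (hsg k kp).
- by move=> k kp; case: (hsg k kp).
- move=> k l kp lp e; case: (eqVneq k l) => // kl; exfalso.
  apply: (h2 k l kp lp); first exact/eqP.
  by rewrite (hsg k kp).2 (hsg l lp).2 e.
Qed.

Lemma from_incr s : incr_idx n p s ->
  [/\ Dp x n p (fun k => x (s k)),
      (forall k, (k < p)%N -> (s k < n)%N),
      (forall k l, (k < p)%N -> (l < p)%N -> s k = s l -> k = l) &
      (forall k, (k < p)%N -> nth 0%N (sort leq (map s (index_iota 0 p))) k = s k)].
Proof.
move=> hs.
have sn := incr_n _ _ _ hs.
have sinj : forall k l, (k < p)%N -> (l < p)%N -> s k = s l -> k = l.
  move=> k l kp lp e; case: (ltngtP k l) => // h.
  - by have := incr_lt _ _ _ hs _ _ h lp; rewrite e ltnn.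
  - by have := incr_lt _ _ _ hs _ _ h kp; rewrite e ltnn.
have srt : sort leq (map s (index_iota 0 p)) = map s (index_iota 0 p).
  apply: sorted_sort; first exact: leq_trans.
  apply/(sortedP 0%N) => i; rewrite size_map size_iota subn0 => ip.
  rewrite !(nth_map 0%N) ?size_iota ?subn0 //; last by lia.
  rewrite !nth_iota ?subn0 //; last by lia.
  by rewrite !add0n ltnW // (incr_lt _ _ _ hs).
split => //.
- split; first by move=> k kp; exists (s k); split => //; exact: sn.
  move=> k l kp lp kl e; apply: kl; apply: sinj => //.
  exact: x_inj (sn _ kp) (sn _ lp) e.
- move=> k kp; rewrite srt (nth_map 0%N) ?size_iota ?subn0 //.
  by rewrite nth_iota ?subn0.
Qed.

Lemma res_min : exists v : \bar R,
  is_max_value (Dp x n p) (maxmin_obj alpha p) v /\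
  is_max_value (incr_idx n p) (chain_min alpha x p) v.
Proof.
apply: assemble.
- move=> z hz; have [sg [h1 h2 h3]] := from_Dp _ hz; eexists; split.
    exact: (incr_t _ h1 h3).
  exact: (maxmin_eq _ _ h1 h2 h3).
- move=> s hs; have [hD h1 h3 hn] := from_incr _ hs.
  exists (fun k => x (s k)); split => //.
  rewrite (maxmin_eq _ _ h1 (fun k _ => erefl) h3).
  exact: chain_min_ext.
- apply: fin_max => //; first lia.
  exact: chain_min_ext.
Qed.

Lemma res_sum : exists v : \bar R,
  is_max_value (Dp x n p) (maxsummin_obj alpha p) v /\
  is_max_value (incr_idx n p) (chain_sum alpha x p) v.
Proof.
apply: assemble.
- move=> z hz; have [sg [h1 h2 h3]] := from_Dp _ hz; eexists; split.
    exact: (incr_t _ h1 h3).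
  exact: (summin_eq _ _ h1 h2 h3).
- move=> s hs; have [hD h1 h3 hn] := from_incr _ hs.
  exists (fun k => x (s k)); split => //.
  rewrite (summin_eq _ _ h1 (fun k _ => erefl) h3).
  exact: chain_sum_ext.
- apply: fin_max => //; first lia.
  exact: chain_sum_ext.
Qed.

End Main.

Theorem proposition3 (R : realType) (alpha : R) (n p : nat)
  (x : nat -> R * R) :
  0 < alpha ->
  (forall i j, (i < j)%N -> (j < n)%N -> prec (x i) (x j)) ->
  (2 <= p)%N -> (p <= n)%N ->
  (exists v : \bar R,
     is_max_value (Dp x n p) (maxmin_obj alpha p) v /\
     is_max_value (incr_idx n p) (chain_min alpha x p) v) /\
  (exists v : \bar R,
     is_max_value (Dp x n p) (maxsummin_obj alpha p) v /\
     is_max_value (incr_idx n p) (chain_sum alpha x p) v).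
Proof.
move=> ha hx hp hpn; split.
- exact: res_min.
- exact: res_sum.
Qed.
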